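(* Let $G$ be a finite group, $\varphi,\psi\in\mathrm{Aut}(G)$, and $U,V\leq G\times G$ with $\Delta(G,\varphi)\leq U$ and $\Delta(G,\psi)\leq V$. Then (i) $k_2(U)=\varphi(k_1(U))$; (ii) $k_1(U\ast V)=k_1(U)\,\varphi^{-1}(k_1(V))$; (iii) $k_2(U\ast V)=k_2(V)\,\psi(k_2(U))$.
   Context: $\Delta(G,\varphi)=\{(g,\varphi(g)):g\in G\}$. For $W\leq G\times G$: $p_1(W)=\{g:\exists h,(g,h)\in W\}$, $p_2(W)=\{h:\exists g,(g,h)\in W\}$, $k_1(W)=\{g:(g,1)\in W\}$, $k_2(W)=\{h:(1,h)\in W\}$. The $\ast$-product of $U,V\leq G\times G$ is $U\ast V=\{(u,v)\in p_1(U)\times p_2(V):\exists x\in p_2(U)\cap p_1(V),\ (u,x)\in U,\ (x,v)\in V\}$. *)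

(* Defs.v *)
From mathcomp Require Import all_boot all_fingroup.
Set Implicit Arguments. Unset Strict Implicit. Unset Printing Implicit Defensive.
Import GroupScope.
Local Open Scope group_scope.

Section Defs.
Variable gT : finGroupType.

Definition Delta (G : {set gT}) (phi : {perm gT}) : {set gT * gT} :=
  [set (g, phi g) | g in G].

Definition p1 (W : {set gT * gT}) : {set gT} := [set g | [exists h, (g, h) \in W]].
Definition p2 (W : {set gT * gT}) : {set gT} := [set h | [exists g, (g, h) \in W]].
Definition k1 (W : {set gT * gT}) : {set gT} := [set g | (g, 1) \in W].
Definition k2 (W : {set gT * gT}) : {set gT} := [set h | (1, h) \in W].

Definition star (U V : {set gT * gT}) : {set gT * gT} :=
  [set uv : gT * gT | [&& uv.1 \in p1 U, uv.2 \in p2 V &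
     [exists x, [&& x \in p2 U, x \in p1 V, (uv.1, x) \in U & (x, uv.2) \in V]]]].
End Defs.

(* Main.v *)
Require Import Defs.
From mathcomp Require Import all_boot all_fingroup.
Import GroupScope.
Local Open Scope group_scope.

Lemma pairM (gT : finGroupType) (a b c d : gT) :
  ((a, b) * (c, d))%g = (a * c, b * d) :> gT * gT.
Proof. by []. Qed.

Lemma pairV (gT : finGroupType) (a b : gT) :
  ((a, b)^-1)%g = (a^-1, b^-1) :> gT * gT.
Proof. by []. Qed.

Lemma autM (gT : finGroupType) (G : {group gT}) (phi : {perm gT}) x y :
  phi \in Aut G -> x \in G -> y \in G -> phi (x * y) = phi x * phi y.
Proof. by move=> /Aut_morphic/morphicP H xG yG; rewrite H. Qed.

Theorem lemma5p4 (gT : finGroupType) (G : {group gT}) (phi psi : {perm gT})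
    (U V : {group gT * gT}) :
  phi \in Aut G -> psi \in Aut G ->
  U \subset setX G G -> V \subset setX G G ->
  Delta G phi \subset U -> Delta G psi \subset V ->
  [/\ k2 U = phi @: k1 U,
      k1 (star U V) = k1 U * ((phi^-1)%g @: k1 V)
    & k2 (star U V) = k2 V * (psi @: k2 U)].
Proof.
move=> Aphi Apsi sU sV dU dV.
have AphiV : (phi^-1)%g \in Aut G by rewrite groupV.
have inU a b : (a, b) \in U -> a \in G /\ b \in G.
  by move=> H; have := subsetP sU _ H; rewrite inE /= => /andP[].
have inV a b : (a, b) \in V -> a \in G /\ b \in G.
  by move=> H; have := subsetP sV _ H; rewrite inE /= => /andP[].
have DU g : g \in G -> (g, phi g) \in U.
  by move=> gG; apply: (subsetP dU); apply: imset_f.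
have DV g : g \in G -> (g, psi g) \in V.
  by move=> gG; apply: (subsetP dV); apply: imset_f.
split.
- apply/setP => h; rewrite inE; apply/idP/imsetP.
  + move=> H; have [_ hG] := inU _ _ H.
    exists ((phi^-1)%g h); last by rewrite permKV.
    rewrite inE.
    have gG : (phi^-1)%g h \in G by apply: Aut_closed.
    have := groupM (DU _ gG) (groupVr H).
    by rewrite permKV pairV pairM invg1 mulg1 mulgV.
  + case=> g; rewrite inE => H ->; have [gG _] := inU _ _ H.
    have := groupM (groupVr H) (DU _ gG).
    by rewrite pairV pairM invg1 mul1g mulVg.
- apply/setP => g; rewrite !inE /=; apply/idP/idP.
  + case/and3P => _ _ /existsP [x /and4P [_ _ Hgx Hx1]].
    have [xG _] := inV _ _ Hx1.
    have yG : (phi^-1)%g x \in G by apply: Aut_closed.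
    have Hy := DU _ yG; rewrite permKV in Hy.
    rewrite -(mulgKV ((phi^-1)%g x) g); apply: mem_mulg.
      by rewrite inE; have := groupM Hgx (groupVr Hy); rewrite pairV pairM mulgV.
    by apply: imset_f; rewrite inE.
  + case/mulsgP=> a y; rewrite inE => Ha /imsetP [b]; rewrite inE => Hb -> ->.
    have [bG _] := inV _ _ Hb.
    have yG : (phi^-1)%g b \in G by apply: Aut_closed.
    have Hy := DU _ yG; rewrite permKV in Hy.
    have Hab : (a * (phi^-1)%g b, b) \in U.
      by have := groupM Ha Hy; rewrite pairM mul1g.
    apply/and3P; split.
    * by apply/existsP; exists b.
    * by apply/existsP; exists b.
    * apply/existsP; exists b; rewrite Hab Hb !inE andbT.
      rewrite andbT; apply/andP; split; apply/existsP; [exists (a * (phi^-1)%g b) | exists 1%g] => //.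
- apply/setP => h; rewrite !inE /=; apply/idP/idP.
  + case/and3P => _ _ /existsP [x /and4P [_ _ H1x Hxh]].
    have [_ xG] := inU _ _ H1x.
    have Hx := DV _ xG.
    rewrite -(mulgKV (psi x) h); apply: mem_mulg.
      by rewrite inE; have := groupM Hxh (groupVr Hx); rewrite pairV pairM mulgV.
    by apply: imset_f; rewrite inE.
  + case/mulsgP=> b y; rewrite inE => Hb /imsetP [a]; rewrite inE => Ha -> ->.
    have [_ aG] := inU _ _ Ha.
    have Hx := DV _ aG.
    have Hab : (a, b * psi a) \in V.
      by have := groupM Hb Hx; rewrite pairM mul1g.
    apply/and3P; split.
    * by apply/existsP; exists a.
    * by apply/existsP; exists a.
    * apply/existsP; exists a; rewrite Hab Ha !inE !andbT.
      rewrite ?andbT; apply/andP; split; apply/existsP; [exists 1%g | exists (b * psi a)] => //.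
Qed.
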